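(* Let $X^+\subseteq\mathcal A^{\mathbb N}$ be a one-sided subshift, where $\mathcal A=\{0,1,\dots,d-1\}$. For any choice of points $a^{(n)}=a^{(n)}_0a^{(n)}_1\dots\in X^+$ ($n\ge0$), let $b^{(n)}\in\mathcal A^{\mathbb Z}$ be the bisequence $0^\infty.a^{(n)}$ (i.e. $b^{(n)}_i=a^{(n)}_i$ for $i\ge0$ and $b^{(n)}_i=0$ for $i<0$), and set $x_n(a^{(n)})=\sigma^n b^{(n)}$. Then $\tilde X$ is exactly the set of all limit points of sequences $(x_n(a^{(n)}))_{n\ge0}$ (limits of convergent subsequences), taken over all choices of $a^{(n)}\in X^+$, $n\ge0$.
   Context: $\sigma$ is the shift $(\sigma x)_i=x_{i+1}$ on $\mathcal A^{\mathbb N}$ and $\mathcal A^{\mathbb Z}$, with the product topology. A one-sided subshift is a nonempty closed $\sigma$-invariant subset of $\mathcal A^{\mathbb N}$. Its natural extension is $\tilde X=\{x\in\mathcal A^{\mathbb Z}: x_px_{p+1}\dots\in X^+ \text{ for all } p\in\mathbb Z\}$. *)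

(* Defs.v *)
From HB Require Import structures.
From mathcomp Require Import all_boot all_order all_algebra.
From mathcomp Require Import all_classical all_reals all_analysis.
Set Implicit Arguments. Unset Strict Implicit. Unset Printing Implicit Defensive.
Import Order.TTheory GRing.Theory Num.Theory.
Local Open Scope classical_set_scope.

Definition alph (d : nat) : Type := discrete_topology 'I_d.

Definition onesided (d : nat) := {ptws nat -> alph d}.
Definition twosided (d : nat) := {ptws int -> alph d}.

Definition shiftN (d : nat) (x : onesided d) : onesided d := fun i => x i.+1.

Definition subshift (d : nat) (X : set (onesided d)) : Prop :=
  X !=set0 /\ closed X /\ (forall x, X x -> X (shiftN x)).

Definition natext (d : nat) (X : set (onesided d)) : set (twosided d) :=
  [set x | forall p : int, X (fun i : nat => x (p + (i%:Z))%R)].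

Definition zeroL (d : nat) (hd : (0 < d)%N) : alph d := Ordinal hd.

Definition bseq (d : nat) (hd : (0 < d)%N) (a : onesided d) : twosided d :=
  fun i : int => match i with Posz k => a k | Negz _ => zeroL hd end.

Definition shiftZn (d : nat) (n : nat) (y : twosided d) : twosided d :=
  fun i : int => y (i + (n%:Z))%R.

Definition xn (d : nat) (hd : (0 < d)%N) (n : nat) (a : onesided d) : twosided d :=
  shiftZn n (bseq hd a).

Definition subseq_limit (d : nat) (u : nat -> twosided d) (y : twosided d) : Prop :=
  exists phi : nat -> nat, {homo phi : m n / (m < n)%N} /\
    ((fun k => u (phi k)) @ \oo --> y).

(* Main.v *)
Require Import Defs.
From mathcomp Require Import all_boot all_order all_algebra.
From mathcomp Require Import all_classical all_reals all_analysis.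
From mathcomp Require Import zify.
Local Open Scope classical_set_scope.
Import Order.TTheory GRing.Theory Num.Theory.

Lemma cvgP (d : nat) (T : choiceType) (u : nat -> {ptws T -> alph d}) (y : {ptws T -> alph d}) :
  u @ \oo --> y <-> forall t, \forall n \near \oo, u n t = y t.
Proof.
have := @pointwise_cvgP (discrete_topology T) (alph d) (u @ \oo) y _.
move=> /(_ _) H; rewrite H; split=> h t.
  by move/(discrete_cvg _ _): (h t).
by apply/discrete_cvg; apply: h.
Qed.

Lemma iter_shiftN d m (x : onesided d) i : iter m (@shiftN d) x i = x (m + i)%N.
Proof. by elim: m i => [|m IH] i //=; rewrite /shiftN IH addSnnS. Qed.

Lemma iter_shiftN_X d (X : set (onesided d)) m x :
  (forall x, X x -> X (shiftN x)) -> X x -> X (iter m (@shiftN d) x).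
Proof. by move=> H Xx; elim: m => //= m IH; apply: H. Qed.

Theorem proposition5p5 (d : nat) (hd : (0 < d)%N) (X : set (onesided d)) :
  subshift X ->
  natext X =
  [set y : twosided d | exists a : nat -> onesided d,
     (forall n, X (a n)) /\ subseq_limit (fun n => xn hd n (a n)) y].
Proof.
move=> [_ [clX shX]]; apply/seteqP; split.
- move=> y Hy /=.
  exists (fun n (i : nat) => y (((Posz i)) - ((Posz n)))%R); split.
    move=> n; have := Hy (- ((Posz n)))%R.
    by congr X; apply: funext => i; rewrite addrC.
  exists id; split => //.
  apply/cvgP => t; exists (absz t) => // n /= hn.
  rewrite /xn /shiftZn /bseq.
  case E: (t + (Posz n))%R => [k|k]; last by exfalso; lia.
  by rewrite /Defs.bseq /= -E addrK.
- move=> y [a [Xa [phi [hphi cv]]]] p.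
  have phige : forall k, (k <= phi k)%N.
    elim=> // k IH; apply: leq_ltn_trans IH _; exact: hphi.
  set z : onesided d := fun i : nat => y (p + ((Posz i)))%R.
  set w := fun k => iter (absz (p + (Posz (phi k)))%R) (@shiftN d) (a (phi k)).
  apply: (@closed_cvg _ _ (\oo) _ w X clX).
    by apply: nearW => k; apply: iter_shiftN_X.
  apply/cvgP => i.
  move/cvgP: cv => /(_ (p + (Posz i))%R) cvi.
  have ev : \forall k \near \oo, (absz p <= k)%N by exists (absz p).
  near=> k.
  have hk : (absz p <= k)%N by near: k.
  have e1 := near cvi k.
  rewrite /w iter_shiftN /z -(near cvi k) //.
  rewrite /xn /shiftZn /bseq.
  have -> : (p + (Posz i) + (Posz (phi k)))%R = Posz (addn (absz (p + (Posz (phi k)))%R) i).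
    move: (phige k) hk; clear -p i k phi; move=> h1 h2; lia.
  by rewrite /Defs.bseq.
Unshelve. all: by end_near.
Qed.
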